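(* Let $\Omega$ be a compact metric space, $T:\Omega\to\Omega$ a homeomorphism, $\mathcal{H}$ a proper unique visibility Gromov hyperbolic space which is strongly hyperbolic of parameter $\varepsilon>0$ with respect to a base point $p\in\mathcal{H}$, and $A:\Omega\to\mathrm{Isom}(\mathcal{H})$ continuous for the topology of uniform convergence on bounded sets. Let $\alpha:\Omega\to\partial\mathcal{H}$ be a continuous section with $A^*(\omega)\cdot\alpha(\omega)=\alpha(T\omega)$ for all $\omega$, and define $\phi(\omega)=-b_{p,\alpha(T\omega)}(A(\omega)\cdot p)$. If $(T,A)$ is $\tau$-H\''older and $\alpha$ is $\tau$-H\''older with respect to the metric $\varrho_\varepsilon$ on $\partial\mathcal{H}$ (i.e. $\varrho_\varepsilon(\alpha(\omega_1),\alpha(\omega_2))\le C d_\Omega(\omega_1,\omega_2)^\tau$ for some $C$), then $\phi$ is $\tau$-H\''older.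
   Context: Gromov product: $(x,y)_p=\tfrac12\big(d_{\mathcal{H}}(x,p)+d_{\mathcal{H}}(y,p)-d_{\mathcal{H}}(x,y)\big)$ for $x,y\in\mathcal{H}$; $\varrho_\varepsilon(x,y)=e^{-\varepsilon(x,y)_p}$. $\mathcal{H}$ is strongly hyperbolic of parameter $\varepsilon$ if $\varrho_\varepsilon(x,y)\le\varrho_\varepsilon(x,z)+\varrho_\varepsilon(y,z)$ for all $x,y,z\in\mathcal{H}$. In that case the Gromov product extends continuously to $\mathcal{H}\cup\partial\mathcal{H}$ via $(x,y)_p=\lim_i(x_i,y_i)_p$ for $x_i\to x$, $y_i\to y$ (independent of the sequences), and $\varrho_\varepsilon(x,y)=e^{-\varepsilon(x,y)_p}$ is a metric on $\partial\mathcal{H}$. A proper unique geodesic space is Gromov hyperbolic if geodesic triangles are $\delta$-slim for some $\delta$; $\partial\mathcal{H}$ is the set of classes of geodesic rays at bounded distance; unique visibility means any two distinct boundary points are ends of a unique bi-infinite geodesic. An isometry $A$ induces $A^*[\gamma]=[A\circ\gamma]$ on $\partial\mathcal{H}$. Busemann function: $b_{p,\alpha}(h)=\lim_n\big(d_{\mathcal{H}}(x_n,h)-d_{\mathcal{H}}(x_n,p)\big)$ for $x_n\to\alpha$. Continuity of $A$ for uniform convergence on bounded sets: for every bounded $K$, $\omega_0$, $\eta>0$ there is $\delta>0$ with $d_{\mathcal{H}}(A(\omega)h,A(\omega_0)h)<\eta$ for $h\in K$ when $d_\Omega(\omega,\omega_0)<\delta$. $(T,A)$ is $\tau$-H\''older: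 for every bounded $K\subset\mathcal{H}$ there is $C_K$ with $d_{\mathcal{H}}(A(\omega_1)h,A(\omega_2)h)\le C_K d_\Omega(\omega_1,\omega_2)^\tau$ for $h\in K$. *)

(* Defs.v *)
From Stdlib Require Import Reals Lra List.
Open Scope R_scope.

Section MetricDefs.
Context {X : Type} (d : X -> X -> R).

Definition is_metric : Prop :=
  (forall x y, 0 <= d x y) /\ (forall x y, d x y = 0 <-> x = y) /\
  (forall x y, d x y = d y x) /\ (forall x y z, d x z <= d x y + d y z).

Definition open_in (U : X -> Prop) : Prop :=
  forall x, U x -> exists r, 0 < r /\ forall y, d x y < r -> U y.

Definition compact_set (K : X -> Prop) : Prop :=
  forall (I : Type) (U : I -> X -> Prop),
    (forall i, open_in (U i)) -> (forall x, K x -> exists i, U i x) ->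
    exists l : list I, forall x, K x -> exists i, In i l /\ U i x.

Definition compact_space : Prop := compact_set (fun _ => True).

Definition proper_space : Prop :=
  forall x r, compact_set (fun y => d x y <= r).

Definition bounded_set (K : X -> Prop) : Prop :=
  exists x0 r, forall h, K h -> d x0 h <= r.

Definition geod_segment (x y : X) (g : R -> X) : Prop :=
  g 0 = x /\ g (d x y) = y /\
  forall s t, 0 <= s <= d x y -> 0 <= t <= d x y -> d (g s) (g t) = Rabs (s - t).

Definition unique_geodesic_space : Prop :=
  forall x y, (exists g, geod_segment x y g) /\
    forall g1 g2, geod_segment x y g1 -> geod_segment x y g2 ->
      forall s, 0 <= s <= d x y -> g1 s = g2 s.

Definition slim_triangles (delta : R) : Prop :=
  forall x y z g1 g2 g3, geod_segment x y g1 -> geod_segment y z g2 ->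
    geod_segment z x g3 ->
    forall s, 0 <= s <= d x y ->
      (exists t, 0 <= t <= d y z /\ d (g1 s) (g2 t) <= delta) \/
      (exists t, 0 <= t <= d z x /\ d (g1 s) (g3 t) <= delta).

Definition gromov_hyperbolic : Prop :=
  exists delta, 0 <= delta /\ slim_triangles delta.

Definition is_ray (g : R -> X) : Prop :=
  forall s t, 0 <= s -> 0 <= t -> d (g s) (g t) = Rabs (s - t).

Definition ray_equiv (g1 g2 : R -> X) : Prop :=
  exists K, forall t, 0 <= t -> d (g1 t) (g2 t) <= K.

(** a boundary point = an equivalence class of geodesic rays *)
Definition bd_class (C : (R -> X) -> Prop) : Prop :=
  exists g, is_ray g /\ forall g', C g' <-> (is_ray g' /\ ray_equiv g g').

Definition bdry : Type := { C : (R -> X) -> Prop | bd_class C }.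

Definition bi_geodesic (c : R -> X) : Prop :=
  forall s t, d (c s) (c t) = Rabs (s - t).

Definition joins (c : R -> X) (xi eta : bdry) : Prop :=
  bi_geodesic c /\ proj1_sig xi (fun t => c t) /\ proj1_sig eta (fun t => c (- t)).

Definition unique_visibility : Prop :=
  forall xi eta : bdry, xi <> eta ->
    (exists c, joins c xi eta) /\
    forall c1 c2, joins c1 xi eta -> joins c2 xi eta ->
      forall t, exists s, c2 s = c1 t.

Definition gprod (p x y : X) : R := (d x p + d y p - d x y) / 2.

Definition rho (eps : R) (p x y : X) : R := exp (- eps * gprod p x y).

Definition strongly_hyperbolic (eps : R) (p : X) : Prop :=
  forall x y z, rho eps p x y <= rho eps p x z + rho eps p y z.

Definition conv_bd (p : X) (x : nat -> X) (xi : bdry) : Prop :=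
  exists g, proj1_sig xi g /\
    forall M, exists N, forall n m, (N <= n)%nat -> (N <= m)%nat ->
      M <= gprod p (x n) (g (INR m)).

(** rho_eps extended to the boundary: r is the value of rho_eps(xi,eta) *)
Definition rho_bd (eps : R) (p : X) (xi eta : bdry) (r : R) : Prop :=
  forall x y, conv_bd p x xi -> conv_bd p y eta ->
    Un_cv (fun n => rho eps p (x n) (y n)) r.

(** Busemann function: b is the value of b_{p,xi}(h) *)
Definition busemann (p : X) (xi : bdry) (h : X) (b : R) : Prop :=
  forall x, conv_bd p x xi -> Un_cv (fun n => d (x n) h - d (x n) p) b.

Definition is_isometry (f : X -> X) : Prop :=
  (forall x y, d (f x) (f y) = d x y) /\ (forall y, exists x, f x = y).

Definition bd_act (f : X -> X) (xi eta : bdry) : Prop :=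
  forall g, proj1_sig xi g -> proj1_sig eta (fun t => f (g t)).

End MetricDefs.

Definition continuous_map {Y Z : Type} (dY : Y -> Y -> R) (dZ : Z -> Z -> R)
  (f : Y -> Z) : Prop :=
  forall y0 e, 0 < e -> exists del, 0 < del /\
    forall y, dY y y0 < del -> dZ (f y) (f y0) < e.

Definition homeomorphism {Y : Type} (dY : Y -> Y -> R) (T : Y -> Y) : Prop :=
  exists Tinv, (forall y, Tinv (T y) = y) /\ (forall y, T (Tinv y) = y) /\
    continuous_map dY dY T /\ continuous_map dY dY Tinv.

(** x^tau with the convention 0^tau = 0 (tau > 0) *)
Definition hpow (x tau : R) : R :=
  if Req_EM_T x 0 then 0 else Rpower x tau.

Definition isom_cont_unif_bdd {O H : Type} (dO : O -> O -> R) (dH : H -> H -> R)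
  (A : O -> H -> H) : Prop :=
  forall K : H -> Prop, bounded_set dH K -> forall o0 eta, 0 < eta ->
    exists del, 0 < del /\ forall o, dO o o0 < del ->
      forall h, K h -> dH (A o h) (A o0 h) < eta.

Definition cocycle_holder {O H : Type} (dO : O -> O -> R) (dH : H -> H -> R)
  (A : O -> H -> H) (tau : R) : Prop :=
  forall K : H -> Prop, bounded_set dH K -> exists C,
    forall o1 o2 h, K h -> dH (A o1 h) (A o2 h) <= C * hpow (dO o1 o2) tau.

Definition bd_continuous {O H : Type} (dO : O -> O -> R) (dH : H -> H -> R)
  (eps : R) (p : H) (al : O -> bdry dH) : Prop :=
  forall o0 e, 0 < e -> exists del, 0 < del /\ forall o, dO o o0 < del ->
    forall r, rho_bd dH eps p (al o) (al o0) r -> r < e.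

Definition bd_holder {O H : Type} (dO : O -> O -> R) (dH : H -> H -> R)
  (eps : R) (p : H) (al : O -> bdry dH) (tau : R) : Prop :=
  exists C, forall o1 o2 r, rho_bd dH eps p (al o1) (al o2) r ->
    r <= C * hpow (dO o1 o2) tau.

Definition real_holder {O : Type} (dO : O -> O -> R) (f : O -> R) (tau : R) : Prop :=
  exists C, forall o1 o2, Rabs (f o1 - f o2) <= C * hpow (dO o1 o2) tau.

(* Main.v *)
Require Import Defs.
From Stdlib Require Import Reals.
From Stdlib Require Import Lra Lia List.
Open Scope R_scope.

Lemma exp_mono x y : x <= y -> exp x <= exp y.
Proof.
  intros H; destruct (Rle_lt_or_eq_dec _ _ H) as [h|h].
  - left; apply exp_increasing; exact h.
  - subst; lra.
Qed.

Lemma exp_small (eps : R) : 0 < eps -> forall e, 0 < e ->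
  exists M, forall G, M <= G -> exp (- eps * G) < e.
Proof.
  intros He e he. exists (ln (e/2) / (- eps)). intros G HG.
  apply Rle_lt_trans with (exp (ln (e/2))).
  - apply exp_mono.
    assert (Hx : ln (e/2) = - eps * (ln (e/2) / (- eps))) by (field; lra).
    rewrite Hx. apply Rmult_le_compat_neg_l; lra.
  - rewrite exp_ln; lra.
Qed.

Lemma exp_diff a b Mx r : b <= Mx -> 0 <= r -> exp (- a) <= r + exp (- b) ->
  b - a <= r * exp Mx.
Proof.
  intros Hb Hr H.
  assert (E : exp (- a) = exp (- b) * exp (b - a)).
  { rewrite <- exp_plus. f_equal. ring. }
  pose proof (exp_ineq1_le (b - a)) as H1.
  pose proof (exp_pos (- b)) as H2.
  assert (H3 : exp (- b) * (b - a) <= r) by nra.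
  assert (H4 : exp b * exp (- b) = 1) by (rewrite <- exp_plus; replace (b + - b) with 0 by ring; apply exp_0).
  pose proof (exp_pos b) as H5.
  assert (H6 : b - a <= r * exp b).
  { assert (H7 : exp b * (exp (- b) * (b - a)) <= exp b * r) by (apply Rmult_le_compat_l; lra).
    rewrite <- Rmult_assoc, H4 in H7. lra. }
  pose proof (exp_mono _ _ Hb). nra.
Qed.

Lemma fold_max_in (l : list nat) i : In i l -> INR i <= fold_right Rmax 0 (map INR l).
Proof.
  induction l as [|a l IH]; simpl; [tauto|].
  intros [<-|h].
  - apply Rmax_l.
  - eapply Rle_trans; [apply IH; exact h| apply Rmax_r].
Qed.

Section Hyp.
Context {X : Type} (d : X -> X -> R) (Hm : is_metric d) (eps : R) (p : X)
  (Heps : 0 < eps) (Hs : strongly_hyperbolic d eps p).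

Lemma d_nonneg x y : 0 <= d x y. Proof. apply Hm. Qed.
Lemma d_refl x : d x x = 0. Proof. apply Hm; reflexivity. Qed.
Lemma d_sym x y : d x y = d y x. Proof. apply Hm. Qed.
Lemma d_tri x y z : d x z <= d x y + d y z. Proof. apply Hm. Qed.

Lemma rho_sym x y : rho d eps p x y = rho d eps p y x.
Proof. unfold rho, gprod. rewrite (d_sym x y), (Rplus_comm (d x p)). reflexivity. Qed.

Lemma rho_pos x y : 0 < rho d eps p x y.
Proof. apply exp_pos. Qed.

Lemma rho_diff a b a' b' :
  Rabs (rho d eps p a b - rho d eps p a' b') <= rho d eps p a a' + rho d eps p b b'.
Proof.
  pose proof (Hs a b a'). pose proof (Hs a' b b').
  pose proof (Hs a' b' a). pose proof (Hs a b' b).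
  pose proof (rho_sym b a'). pose proof (rho_sym b' a).
  pose proof (rho_sym a' a). pose proof (rho_sym b' b).
  apply Rabs_le. lra.
Qed.

Lemma gprod_le x z : gprod d p x z <= d z p.
Proof. unfold gprod. pose proof (d_tri x z p). lra. Qed.

Lemma log_lip x y z Rb : d z p <= Rb ->
  gprod d p x z - gprod d p y z <= exp (eps * Rb) * rho d eps p x y / eps.
Proof.
  intros Hz.
  pose proof (Hs y z x) as H. rewrite (rho_sym z x) in H. rewrite (rho_sym y x) in H.
  unfold rho at 1 3 in H.
  replace (- eps * gprod d p y z) with (- (eps * gprod d p y z)) in H by ring.
  replace (- eps * gprod d p x z) with (- (eps * gprod d p x z)) in H by ring.
  assert (Hb : eps * gprod d p x z <= eps * Rb).
  { apply Rmult_le_compat_l; [lra|]. eapply Rle_trans; [apply gprod_le|exact Hz]. }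
  pose proof (exp_diff _ _ _ _ Hb (Rlt_le _ _ (rho_pos x y)) H) as E.
  apply (Rmult_le_reg_l eps); [lra|].
  replace (eps * (exp (eps * Rb) * rho d eps p x y / eps)) with (rho d eps p x y * exp (eps * Rb)) by (field; lra).
  lra.
Qed.

Lemma class_member (xi : bdry d) g : proj1_sig xi g -> is_ray d g.
Proof. destruct xi as [C [g0 [Hr Hiff]]]; simpl. intros h; apply Hiff in h; tauto. Qed.

Lemma class_nonempty (xi : bdry d) : exists g, proj1_sig xi g.
Proof.
  destruct xi as [C [g0 [Hr Hiff]]]; simpl. exists g0. apply Hiff. split; [exact Hr|].
  exists 0. intros t _. rewrite d_refl. lra.
Qed.

Lemma class_equiv (xi : bdry d) g g' : proj1_sig xi g -> proj1_sig xi g' ->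
  exists K, forall t, 0 <= t -> d (g t) (g' t) <= K.
Proof.
  destruct xi as [C [g0 [Hr Hiff]]]; simpl. intros h h'.
  apply Hiff in h; apply Hiff in h'. destruct h as [_ [K1 HK1]]. destruct h' as [_ [K2 HK2]].
  exists (K1 + K2). intros t ht. pose proof (HK1 t ht); pose proof (HK2 t ht).
  pose proof (d_tri (g t) (g0 t) (g' t)). rewrite (d_sym (g t) (g0 t)) in H1. lra.
Qed.

Lemma ray_base g : is_ray d g -> forall t, 0 <= t -> t - d (g 0) p <= d (g t) p.
Proof.
  intros Hr t ht. pose proof (Hr t 0 ht (Rle_refl 0)). rewrite Rminus_0_r, Rabs_right in H by lra.
  pose proof (d_tri (g t) p (g 0)). rewrite (d_sym p (g 0)) in H0. lra.
Qed.

Lemma ray_conv (xi : bdry d) g : proj1_sig xi g -> conv_bd d p (fun n => g (INR n)) xi.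
Proof.
  intros Hg. pose proof (class_member _ _ Hg) as Hr.
  exists g. split; [exact Hg|]. intros M.
  destruct (INR_unbounded (M + d (g 0) p)) as [N HN]. exists N. intros n m Hn Hm'.
  apply le_INR in Hn; apply le_INR in Hm'.
  pose proof (ray_base g Hr (INR n) (pos_INR n)).
  pose proof (ray_base g Hr (INR m) (pos_INR m)).
  pose proof (Hr (INR n) (INR m) (pos_INR n) (pos_INR m)).
  unfold gprod. rewrite H1. unfold Rabs; destruct Rcase_abs; lra.
Qed.

Lemma conv_cauchy (xi : bdry d) x x' : conv_bd d p x xi -> conv_bd d p x' xi ->
  forall e, 0 < e -> exists N, forall n m, (N <= n)%nat -> (N <= m)%nat ->
    rho d eps p (x n) (x' m) < e.
Proof.
  intros [g [Hg Hx]] [g' [Hg' Hx']] e He.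
  destruct (class_equiv xi g g' Hg Hg') as [K HK].
  destruct (exp_small eps Heps (e/3)) as [M HM]; [lra|].
  destruct (Hx M) as [N1 H1]. destruct (Hx' M) as [N2 H2].
  set (D := d (g 0) p). set (D' := d (g' 0) p).
  destruct (INR_unbounded (M + (D + D' + K)/2)) as [k0 Hk0].
  set (k := max (max N1 N2) k0).
  assert (k1 : (N1 <= k)%nat) by lia. assert (k2 : (N2 <= k)%nat) by lia.
  assert (k3 : INR k0 <= INR k) by (apply le_INR; lia).
  exists (max N1 N2). intros n m Hn Hm'.
  assert (A1 : rho d eps p (x n) (g (INR k)) < e/3).
  { apply HM. apply H1; lia. }
  assert (A2 : rho d eps p (x' m) (g' (INR k)) < e/3).
  { apply HM. apply H2; lia. }
  assert (A3 : rho d eps p (g (INR k)) (g' (INR k)) < e/3).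
  { apply HM. unfold gprod.
    pose proof (ray_base g (class_member _ _ Hg) (INR k) (pos_INR k)).
    pose proof (ray_base g' (class_member _ _ Hg') (INR k) (pos_INR k)).
    pose proof (HK (INR k) (pos_INR k)). fold D D' in H, H0. lra. }
  pose proof (Hs (x n) (x' m) (g (INR k))).
  pose proof (Hs (x' m) (g (INR k)) (g' (INR k))).
  lra.
Qed.

Lemma rho_limit (xi eta : bdry d) : exists r, rho_bd d eps p xi eta r.
Proof.
  destruct (class_nonempty xi) as [g1 Hg1]. destruct (class_nonempty eta) as [g2 Hg2].
  pose proof (ray_conv _ _ Hg1) as C1. pose proof (ray_conv _ _ Hg2) as C2.
  set (x := fun n => g1 (INR n)) in *. set (y := fun n => g2 (INR n)) in *.
  set (u := fun n => rho d eps p (x n) (y n)).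
  assert (Hc : Cauchy_crit u).
  { intros e He.
    destruct (conv_cauchy _ _ _ C1 C1 (e/2)) as [N1 H1]; [lra|].
    destruct (conv_cauchy _ _ _ C2 C2 (e/2)) as [N2 H2]; [lra|].
    exists (max N1 N2). intros n m Hn Hm'. unfold Rdist, u.
    eapply Rle_lt_trans; [apply rho_diff|].
    pose proof (H1 n m ltac:(lia) ltac:(lia)). pose proof (H2 n m ltac:(lia) ltac:(lia)). lra. }
  destruct (R_complete u Hc) as [r Hr]. exists r.
  intros x' y' Hx' Hy' e He.
  destruct (conv_cauchy _ _ _ Hx' C1 (e/3)) as [N1 H1]; [lra|].
  destruct (conv_cauchy _ _ _ Hy' C2 (e/3)) as [N2 H2]; [lra|].
  destruct (Hr (e/3)) as [N3 H3]; [lra|].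
  exists (max (max N1 N2) N3). intros n Hn.
  pose proof (H1 n n ltac:(lia) ltac:(lia)). pose proof (H2 n n ltac:(lia) ltac:(lia)).
  pose proof (H3 n ltac:(lia)). unfold Rdist, u in *.
  pose proof (rho_diff (x' n) (y' n) (x n) (y n)).
  pose proof (Rabs_triang (rho d eps p (x' n) (y' n) - rho d eps p (x n) (y n))
     (rho d eps p (x n) (y n) - r)).
  replace (rho d eps p (x' n) (y' n) - rho d eps p (x n) (y n) +
     (rho d eps p (x n) (y n) - r)) with (rho d eps p (x' n) (y' n) - r) in H6 by ring.
  lra.
Qed.

End Hyp.

Lemma cv_const c : Un_cv (fun _ => c) c.
Proof. intros e He. exists 0%nat. intros. unfold Rdist. rewrite Rminus_diag, Rabs_R0. lra. Qed.

Theorem propositionA8 (Om : Type) (dOm : Om -> Om -> R)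
  (H : Type) (dH : H -> H -> R) (eps : R) (p : H)
  (T : Om -> Om) (A : Om -> H -> H) (al : Om -> bdry dH) (phi : Om -> R)
  (tau : R) :
  is_metric dOm -> compact_space dOm -> homeomorphism dOm T ->
  is_metric dH -> proper_space dH -> unique_geodesic_space dH ->
  gromov_hyperbolic dH -> unique_visibility dH ->
  0 < eps -> strongly_hyperbolic dH eps p ->
  (forall o, is_isometry dH (A o)) -> isom_cont_unif_bdd dOm dH A ->
  bd_continuous dOm dH eps p al ->
  (forall o, bd_act dH (A o) (al o) (al (T o))) ->
  (forall o, busemann dH p (al (T o)) (A o p) (- phi o)) ->
  0 < tau -> cocycle_holder dOm dH A tau -> bd_holder dOm dH eps p al tau ->
  real_holder dOm phi tau.
Proof.
  intros HmO Hcomp _ Hm _ _ _ _ Heps Hs Hiso Hcont _ Hact Hbus _ Hcoc Hbh.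
  assert (HR : exists Rb, forall o, dH (A o p) p <= Rb).
  { destruct (Hcomp nat (fun n o => dH (A o p) p < INR n)) as [l Hl].
    - intros n o Ho. set (et := INR n - dH (A o p) p).
      destruct (Hcont (fun h => h = p)) with (o0 := o) (eta := et) as [del [Hdel Hd]].
      + exists p, 0. intros h ->. rewrite (d_refl dH Hm). lra.
      + unfold et; lra.
      + exists del. split; [exact Hdel|]. intros o' Ho'.
        rewrite (d_sym dOm HmO) in Ho'. pose proof (Hd o' Ho' p eq_refl).
        pose proof (d_tri dH Hm (A o' p) (A o p) p). unfold et in H0. lra.
    - intros o _. destruct (INR_unbounded (dH (A o p) p)) as [n Hn]. exists n. lra.
    - exists (fold_right Rmax 0 (map INR l)). intros o.
      destruct (Hl o I) as [i [Hi Hio]]. pose proof (fold_max_in l i Hi). lra. }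
  destruct HR as [Rb HRb].
  destruct (Hcoc (fun z => dH p z <= Rb)) as [C1 HC1].
  { exists p, Rb. tauto. }
  destruct Hbh as [C2 HC2].
  set (k := 2 / eps * exp (eps * Rb)).
  assert (Hk : 0 <= k).
  { unfold k. pose proof (exp_pos (eps * Rb)). apply Rmult_le_pos; [|lra].
    apply Rlt_le, Rdiv_lt_0_compat; lra. }
  exists (C1 + k * C2). intros o1 o2.
  set (h := hpow (dOm o1 o2) tau).
  destruct (Hiso o1) as [I1 S1]. destruct (S1 p) as [z1 Hz1].
  destruct (Hiso o2) as [I2 S2]. destruct (S2 p) as [z2 Hz2].
  assert (Bz1 : dH z1 p <= Rb).
  { rewrite <- I1 with (x := z1), Hz1, (d_sym dH Hm). apply HRb. }
  assert (Bz2 : dH z2 p <= Rb).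
  { rewrite <- I2 with (x := z2), Hz2, (d_sym dH Hm). apply HRb. }
  assert (Dz : dH z1 z2 <= C1 * h).
  { rewrite <- I1, Hz1. rewrite <- Hz2 at 1. rewrite (d_sym dH Hm).
    apply HC1. rewrite (d_sym dH Hm). exact Bz2. }
  destruct (class_nonempty dH Hm (al o1)) as [g1 Hg1].
  destruct (class_nonempty dH Hm (al o2)) as [g2 Hg2].
  destruct (rho_limit dH Hm eps p Heps Hs (al o1) (al o2)) as [r Hr].
  pose proof (HC2 o1 o2 r Hr) as Br. fold h in Br.
  assert (Cu : Un_cv (fun n => rho dH eps p (g1 (INR n)) (g2 (INR n))) r).
  { apply Hr; apply ray_conv; auto. }
  assert (W1 := Hbus o1 (fun n => A o1 (g1 (INR n)))
     (ray_conv dH Hm p (al (T o1)) (fun t => A o1 (g1 t)) (Hact o1 g1 Hg1))).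
  assert (W2 := Hbus o2 (fun n => A o2 (g2 (INR n)))
     (ray_conv dH Hm p (al (T o2)) (fun t => A o2 (g2 t)) (Hact o2 g2 Hg2))).
  pose proof (CV_minus _ _ _ _ W1 W2) as Wd. simpl in Wd.
  set (w := fun i => dH (A o1 (g1 (INR i))) (A o1 p) - dH (A o1 (g1 (INR i))) p -
         (dH (A o2 (g2 (INR i))) (A o2 p) - dH (A o2 (g2 (INR i))) p)) in Wd.
  set (ee := fun n => dH z1 z2 + k * rho dH eps p (g1 (INR n)) (g2 (INR n))).
  assert (Ce : Un_cv ee (dH z1 z2 + k * r)).
  { apply CV_plus; [apply cv_const|]. apply CV_mult; [apply cv_const|exact Cu]. }
  assert (Bw : forall n, Rabs (w n) <= ee n).
  { intros n. unfold w, ee.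
    set (a := g1 (INR n)) in *. set (b := g2 (INR n)) in *.
    assert (Ea : dH (A o1 a) p = dH a z1) by (rewrite <- Hz1 at 1; apply I1).
    assert (Eb : dH (A o2 b) p = dH b z2) by (rewrite <- Hz2 at 1; apply I2).
    rewrite Ea, Eb, I1, I2.
    pose proof (log_lip dH Hm eps p Heps Hs a b z2 Rb Bz2) as L1.
    pose proof (log_lip dH Hm eps p Heps Hs b a z2 Rb Bz2) as L2.
    rewrite (rho_sym dH Hm eps p b a) in L2.
    unfold gprod in L1, L2.
    pose proof (d_tri dH Hm a z1 z2). pose proof (d_tri dH Hm a z2 z1).
    rewrite (d_sym dH Hm z2 z1) in H1.
    assert (KK : k * rho dH eps p a b = 2 * (exp (eps * Rb) * rho dH eps p a b / eps))
      by (unfold k; field; lra).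
    rewrite KK. apply Rabs_le. lra. }
  assert (E1 : - phi o1 - - phi o2 <= dH z1 z2 + k * r).
  { apply Rle_cv_lim with (Un := w) (Vn := ee); auto. intros n. pose proof (Bw n).
    unfold Rabs in H0; destruct Rcase_abs in H0; lra. }
  assert (E2 : - (- phi o1 - - phi o2) <= dH z1 z2 + k * r).
  { apply Rle_cv_lim with (Un := fun n => 0 - w n) (Vn := ee); auto.
    - intros n. pose proof (Bw n). unfold Rabs in H0; destruct Rcase_abs in H0; lra.
    - replace (- (- phi o1 - - phi o2)) with (0 - (- phi o1 - - phi o2)) by ring.
      apply CV_minus; [apply cv_const|exact Wd]. }
  assert (k * r <= k * (C2 * h)) by (apply Rmult_le_compat_l; lra).
  apply Rabs_le. lra.
Qed.
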